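(* Let $v\in\mathbb{Z}^d$ be primitive and $p$ an odd prime. For each $h\in M_0$ write $h=c_1(h)\gamma_1(h)$ and $g_v^{-1}hg_v=c_2(h)\gamma_2(h)^{-1}$ with $(c_1(h),c_2(h))\in\mathbb{G}(\mathbb{Z}_p)$ and $(\gamma_1(h),\gamma_2(h))\in\mathbb{G}(\mathbb{Z}[1/p])$. Then: (1) for $h\in M_0$, $q_\infty(O_{v,p,h})=\Delta K\,(k_v\gamma_1(h)^{-1},a_vk_vg_v\gamma_2(h))\,\mathbb{G}(\mathbb{Z})$; (2) for $h\neq h'$ in $M_0$, $Kk_v\gamma_1(h)^{-1}\mathbb{G}_1(\mathbb{Z})\cap Kk_v\gamma_1(h')^{-1}\mathbb{G}_1(\mathbb{Z})=\emptyset$, and in particular $q_\infty(O_{v,p,h})\cap q_\infty(O_{v,p,h'})=\emptyset$; (3) for $h\in M_0$, $q_\infty^{-1}\big(\Delta K(k_v\gamma_1(h)^{-1},a_vk_vg_v\gamma_2(h))\mathbb{G}(\mathbb{Z})\big)\cap O_{v,p}=O_{v,p,h}$.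
   Context: Setup: $\mathbb{G}_1=\mathrm{SO}_d$, $\mathbb{G}_2=\mathrm{ASL}_{d-1}=\{\begin{pmatrix}g&*\\0&1\end{pmatrix}:g\in\mathrm{SL}_{d-1}\}$, $\mathbb{G}=\mathbb{G}_1\times\mathbb{G}_2$. Elements of $\mathbb{G}(\mathbb{R}\times\mathbb{Q}_p)$ are written $((g_{1,\infty},g_{1,p}),(g_{2,\infty},g_{2,p}))$; $\mathbb{G}(\mathbb{Z}[1/p])$ is embedded diagonally; $\mathcal{Y}_p=\mathbb{G}(\mathbb{R}\times\mathbb{Q}_p)/\mathbb{G}(\mathbb{Z}[1/p])$; $\mathcal{U}=\mathbb{G}(\mathbb{R}\times\mathbb{Z}_p)\mathbb{G}(\mathbb{Z}[1/p])\subseteq\mathcal{Y}_p$. The map $q_\infty:\mathcal{U}\to\mathbb{G}(\mathbb{R})/\mathbb{G}(\mathbb{Z})$ is defined by writing $g_{i,p}=c_{i,p}\gamma_{i,p}$ with $c_{i,p}\in\mathbb{G}_i(\mathbb{Z}_p)$, $\gamma_{i,p}\in\mathbb{G}_i(\mathbb{Z}[1/p])$ and setting $q_\infty(((g_{1,\infty},g_{1,p}),(g_{2,\infty},g_{2,p}))\mathbb{G}(\mathbb{Z}[1/p]))=(g_{1,\infty}\gamma_{1,p}^{-1},g_{2,\infty}\gamma_{2,p}^{-1})\mathbb{G}(\mathbb{Z})$. For primitive $v$: $\Lambda_v=v^\perp\cap\mathbb{Z}^d$; $H_v\le\mathrm{SO}_d$ the stabilizer of $v$; $g_v\in\mathrm{SL}_d(\mathbb{Z})$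 a fixed matrix whose first $d-1$ columns form a positively oriented $\mathbb{Z}$-basis of $\Lambda_v$; $L_v=\{(h,g_v^{-1}hg_v):h\in H_v\}$; $k_v\in\mathrm{SO}_d(\mathbb{R})$ fixed with $k_vv=\|v\|e_d$; $a_v=\mathrm{diag}(\|v\|^{-1/(d-1)},\dots,\|v\|^{-1/(d-1)},\|v\|)$; $O_{v,p}=((k_v,e),(a_vk_vg_v,e))\cdot L_v(\mathbb{R}\times\mathbb{Q}_p)\mathbb{G}(\mathbb{Z}[1/p])$. $M$ is a finite set of representatives of $H_v(\mathbb{Q}_p)=\bigsqcup_{h\in M}H_v(\mathbb{Z}_p)hH_v(\mathbb{Z}[1/p])$; $M_0=\{h\in M:h\in\mathrm{SO}_d(\mathbb{Z}_p)\mathrm{SO}_d(\mathbb{Z}[1/p])\}$. $K=H_{e_d}(\mathbb{R})\cong\mathrm{SO}_{d-1}(\mathbb{R})$, $\Delta K=\{(k,k):k\in K\}\le\mathbb{G}(\mathbb{R})$, $\Delta K\times L_v(\mathbb{Z}_p)=\{((k,h'),(k,g_v^{-1}h'g_v)):k\in K,h'\in H_v(\mathbb{Z}_p)\}$, and $O_{v,p,h}=(\Delta K\times L_v(\mathbb{Z}_p))\cdot((k_v,h),(a_vk_vg_v,g_v^{-1}hg_v))\mathbb{G}(\mathbb{Z}[1/p])$. *)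

(* Defs.v *)
From HB Require Import structures.
From mathcomp Require Import all_boot all_order all_algebra.
From mathcomp Require Import classical_sets reals exp.
Set Implicit Arguments. Unset Strict Implicit. Unset Printing Implicit Defensive.
Import Order.TTheory GRing.Theory Num.Theory.
Local Open Scope ring_scope.
Local Open Scope classical_set_scope.

(* The p-adic absolute value on Q and an axiomatic description of Q_p *)
(* (the completion of Q for |.|_p, unique up to isometric iso).       *)
Definition pabs (p : nat) (q : rat) : rat :=
  if q == 0 then 0
  else (p%:R ^+ logn p `|denq q|%N) / (p%:R ^+ logn p `|numq q|%N).

Record is_Qp (p : nat) (F : fieldType) (nrm : F -> rat) : Prop := IsQp {
  Qp_nrm_ge0 : forall x, 0 <= nrm x;
  Qp_nrm_eq0 : forall x, nrm x = 0 <-> x = 0;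
  Qp_nrmM : forall x y, nrm (x * y) = nrm x * nrm y;
  Qp_nrmD : forall x y, nrm (x + y) <= Num.max (nrm x) (nrm y);
  Qp_nrm_rat : forall q : rat, nrm (ratr q) = pabs p q;
  Qp_dense : forall x (e : rat), 0 < e -> exists q : rat, nrm (x - ratr q) < e;
  Qp_complete : forall u : nat -> F,
    (forall e : rat, 0 < e -> exists N, forall m k, (N <= m)%N -> (N <= k)%N ->
        nrm (u m - u k) < e) ->
    exists l, forall e : rat, 0 < e -> exists N, forall m, (N <= m)%N ->
        nrm (u m - l) < e }.

Definition Zp (F : fieldType) (nrm : F -> rat) : F -> Prop := fun x => nrm x <= 1.
Definition Zinvp (p : nat) : rat -> Prop := fun q => exists k : nat, denq q = (p ^ k)%N%:Z.
Definition Zint : rat -> Prop := fun q => denq q = 1.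
Definition anyA (A : Type) : A -> Prop := fun _ => True.

(* d = n.+1 throughout. *)
Definition e_last (A : ringType) (n : nat) : 'cV[A]_n.+1 :=
  \col_i ((i == ord_max)%:R).

(* SO_d(S) and ASL_{d-1}(S) for a subring S of a commutative ring A *)
Definition isSO (A : comUnitRingType) (n : nat) (S : A -> Prop) (g : 'M[A]_n.+1) :=
  [/\ forall i j, S (g i j), g^T *m g = 1%:M & \det g = 1].
Definition isASL (A : comUnitRingType) (n : nat) (S : A -> Prop) (g : 'M[A]_n.+1) :=
  [/\ forall i j, S (g i j), (forall j, g ord_max j = (j == ord_max)%:R) & \det g = 1].
Definition inG (A : comUnitRingType) (n : nat) (S : A -> Prop)
  (x : 'M[A]_n.+1 * 'M[A]_n.+1) := isSO S x.1 /\ isASL S x.2.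

Definition vA (A : comUnitRingType) (n : nat) (v : 'cV[int]_n.+1) : 'cV[A]_n.+1 :=
  map_mx (fun z : int => z%:~R) v.
Definition isH (A : comUnitRingType) (n : nat) (v : 'cV[int]_n.+1) (S : A -> Prop)
  (g : 'M[A]_n.+1) := isSO S g /\ g *m vA A v = vA A v.

Definition primitive (n : nat) (v : 'cV[int]_n.+1) :=
  forall k : int, (forall i, (k %| v i ord0)%Z) -> `|k| = 1.

Definition dotz (n : nat) (v w : 'cV[int]_n.+1) : int := \sum_i v i ord0 * w i ord0.

(* g_v in SL_d(Z) whose first d-1 columns form a positively oriented
   Z-basis of Lambda_v = v^perp \cap Z^d *)
Definition is_gv (n : nat) (v : 'cV[int]_n.+1) (gv : 'M[int]_n.+1) :=
  [/\ \det gv = 1,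
      forall j, j != ord_max -> dotz v (col j gv) = 0,
      forall w : 'cV[int]_n.+1, dotz v w = 0 ->
        exists c : 'cV[int]_n.+1, c ord_max ord0 = 0 /\ w = gv *m c
    & 0 < \det (\matrix_(i, j) (if j == ord_max then v i ord0 else gv i j))].

Definition normv (R : realType) (n : nat) (v : 'cV[int]_n.+1) : R :=
  Num.sqrt (\sum_i ((v i ord0)%:~R) ^+ 2).

Definition av (R : realType) (n : nat) (v : 'cV[int]_n.+1) : 'M[R]_n.+1 :=
  diag_mx (\row_i (if i == ord_max then normv R v
                   else powR (normv R v) (- (n%:R)^-1))).

Definition ratM (A : unitRingType) (n : nat) (g : 'M[rat]_n.+1) : 'M[A]_n.+1 :=
  map_mx ratr g.
Definition intM (A : ringType) (n : nat) (g : 'M[int]_n.+1) : 'M[A]_n.+1 :=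
  map_mx (fun z : int => z%:~R) g.

(* Elements ((g1inf, g1p), (g2inf, g2p)) of G(R x Q_p) *)
Record GA (R : realType) (F : fieldType) (n : nat) := mkGA {
  g1i : 'M[R]_n.+1; g1p : 'M[F]_n.+1; g2i : 'M[R]_n.+1; g2p : 'M[F]_n.+1 }.

Definition inGA (R : realType) (F : fieldType) (n : nat) (x : GA R F n) :=
  inG (@anyA R) (g1i x, g2i x) /\ inG (@anyA F) (g1p x, g2p x).

Definition mulGA (R : realType) (F : fieldType) (n : nat) (x y : GA R F n) : GA R F n :=
  mkGA (g1i x *m g1i y) (g1p x *m g1p y) (g2i x *m g2i y) (g2p x *m g2p y).

(* right multiplication by the diagonal image of gamma in G(Z[1/p]) *)
Definition actGA (R : realType) (F : fieldType) (n : nat) (x : GA R F n)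
  (gam : 'M[rat]_n.+1 * 'M[rat]_n.+1) : GA R F n :=
  mkGA (g1i x *m ratM R gam.1) (g1p x *m ratM F gam.1)
       (g2i x *m ratM R gam.2) (g2p x *m ratM F gam.2).

(* Subsets of Y_p = G(R x Q_p)/G(Z[1/p]) are represented by their
   (right G(Z[1/p])-invariant) preimages in G(R x Q_p); subsets of
   G(R)/G(Z) by their (right G(Z)-invariant) preimages in G(R). *)

Section Objects.
Variables (R : realType) (F : fieldType) (nrm : F -> rat) (p n : nat).
Variables (v : 'cV[int]_n.+1) (gv : 'M[int]_n.+1) (kv : 'M[R]_n.+1).

Definition gvF : 'M[F]_n.+1 := intM F gv.
Definition conjv (h : 'M[F]_n.+1) : 'M[F]_n.+1 := invmx gvF *m h *m gvF.
Definition conjvR (h : 'M[R]_n.+1) : 'M[R]_n.+1 :=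
  invmx (intM R gv) *m h *m intM R gv.

Definition Kset : set 'M[R]_n.+1 :=
  [set k | isSO (@anyA R) k /\ k *m e_last R n = e_last R n].

(* O_{v,p} = ((k_v,e),(a_v k_v g_v,e)) L_v(R x Q_p) G(Z[1/p]) *)
Definition Ovp : set (GA R F n) :=
  [set x | exists (hi : 'M[R]_n.+1) (hp : 'M[F]_n.+1) gam,
     [/\ isH v (@anyA R) hi, isH v (@anyA F) hp, inG (Zinvp p) gam &
       x = actGA (mulGA (mkGA kv 1%:M (av R v *m kv *m intM R gv) 1%:M)
                        (mkGA hi hp (conjvR hi) (conjv hp))) gam]].

(* O_{v,p,h} = (Delta K x L_v(Z_p)) ((k_v,h),(a_v k_v g_v, g_v^-1 h g_v)) G(Z[1/p]) *)
Definition Ovph (h : 'M[F]_n.+1) : set (GA R F n) :=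
  [set x | exists (k : 'M[R]_n.+1) (h' : 'M[F]_n.+1) gam,
     [/\ Kset k, isH v (Zp nrm) h', inG (Zinvp p) gam &
       x = actGA (mulGA (mkGA k h' k (conjv h'))
                        (mkGA kv h (av R v *m kv *m intM R gv) (conjv h))) gam]].

Definition qinf_img (S : set (GA R F n)) : set ('M[R]_n.+1 * 'M[R]_n.+1) :=
  [set y | exists x c1 c2 (gam del : 'M[rat]_n.+1 * 'M[rat]_n.+1),
     S x /\ isSO (Zp nrm) c1 /\ isASL (Zp nrm) c2 /\ inG (Zinvp p) gam /\
         inG Zint del /\
         g1p x = c1 *m ratM F gam.1 /\ g2p x = c2 *m ratM F gam.2 /\
         y = (g1i x *m invmx (ratM R gam.1) *m ratM R del.1,
              g2i x *m invmx (ratM R gam.2) *m ratM R del.2)].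

Definition qinf_pre (T : set ('M[R]_n.+1 * 'M[R]_n.+1)) : set (GA R F n) :=
  [set x | exists c1 c2 (gam : 'M[rat]_n.+1 * 'M[rat]_n.+1),
     inGA x /\ isSO (Zp nrm) c1 /\ isASL (Zp nrm) c2 /\ inG (Zinvp p) gam /\
         g1p x = c1 *m ratM F gam.1 /\ g2p x = c2 *m ratM F gam.2 /\
         T (g1i x *m invmx (ratM R gam.1), g2i x *m invmx (ratM R gam.2))].

Definition DKorbit (gam1 gam2 : 'M[rat]_n.+1) : set ('M[R]_n.+1 * 'M[R]_n.+1) :=
  [set y | exists k (del : 'M[rat]_n.+1 * 'M[rat]_n.+1),
     [/\ Kset k, inG Zint del &
       y = (k *m kv *m invmx (ratM R gam1) *m ratM R del.1,
            k *m (av R v *m kv *m intM R gv) *m ratM R gam2 *m ratM R del.2)]].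

Definition Korbit1 (gam1 : 'M[rat]_n.+1) : set 'M[R]_n.+1 :=
  [set y | exists k del,
     [/\ Kset k, isSO Zint del & y = k *m kv *m invmx (ratM R gam1) *m ratM R del]].

Definition is_reps (M : seq 'M[F]_n.+1) :=
  [/\ forall h, h \in M -> isH v (@anyA F) h,
      forall g, isH v (@anyA F) g -> exists h a (b : 'M[rat]_n.+1),
         [/\ h \in M, isH v (Zp nrm) a, isH v (Zinvp p) b & g = a *m h *m ratM F b]
    & forall h h', h \in M -> h' \in M ->
        (exists a (b : 'M[rat]_n.+1),
           [/\ isH v (Zp nrm) a, isH v (Zinvp p) b & h' = a *m h *m ratM F b]) ->
        h = h'].

Definition inM0 (M : seq 'M[F]_n.+1) (h : 'M[F]_n.+1) :=
  h \in M /\ exists c (gam : 'M[rat]_n.+1),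
    [/\ isSO (Zp nrm) c, isSO (Zinvp p) gam & h = c *m ratM F gam].

Definition hdecomp (h : 'M[F]_n.+1) (c1 c2 : 'M[F]_n.+1) (gam1 gam2 : 'M[rat]_n.+1) :=
  [/\ isSO (Zp nrm) c1, isASL (Zp nrm) c2, inG (Zinvp p) (gam1, gam2),
      h = c1 *m ratM F gam1 & conjv h = c2 *m invmx (ratM F gam2)].

End Objects.

(* Main.v *)
Require Import Defs.
From HB Require Import structures.
From mathcomp Require Import all_boot all_order all_algebra.
From mathcomp Require Import classical_sets reals exp.
Set Implicit Arguments. Unset Strict Implicit. Unset Printing Implicit Defensive.
Import Order.TTheory GRing.Theory Num.Theory.
Local Open Scope ring_scope.

Section SubR.
Variable A : comUnitRingType.
Definition subr (S : A -> Prop) :=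
  [/\ S 1, forall x y, S x -> S y -> S (x - y) & forall x y, S x -> S y -> S (x * y)].
Definition ent (S : A -> Prop) m n (M : 'M[A]_(m, n)) := forall i j, S (M i j).
Variable S : A -> Prop.
Hypothesis hS : subr S.
Lemma sr1 : S 1. Proof. by case: hS. Qed.
Lemma srB x y : S x -> S y -> S (x - y). Proof. by case: hS => _ H _; apply: H. Qed.
Lemma srM x y : S x -> S y -> S (x * y). Proof. by case: hS => _ _ H; apply: H. Qed.
Lemma sr0 : S 0. Proof. by rewrite -(subrr 1); apply: srB; apply: sr1. Qed.
Lemma srN x : S x -> S (- x). Proof. by move=> Hx; rewrite -sub0r; apply: srB => //; apply: sr0. Qed.
Lemma srD x y : S x -> S y -> S (x + y).
Proof. by move=> Hx Hy; rewrite -[y]opprK; apply: srB => //; apply: srN. Qed.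
Lemma sr_nat (m : nat) : S m%:R.
Proof. elim: m => [|m IH]; first exact: sr0. by rewrite -addn1 natrD; apply: srD => //; apply: sr1. Qed.
Lemma sr_int (z : int) : S z%:~R.
Proof. case: z => m; first exact: sr_nat. by rewrite NegzE mulrNz; apply: srN; apply: sr_nat. Qed.
Lemma sr_bool (b : bool) : S b%:R. Proof. exact: sr_nat. Qed.
Lemma srX x k : S x -> S (x ^+ k).
Proof. move=> Hx; elim: k => [|k IH]; first exact: sr1. by rewrite exprS; apply: srM. Qed.
Lemma sr_sum (I : finType) (P : pred I) (G : I -> A) :
  (forall i, S (G i)) -> S (\sum_(i | P i) G i).
Proof. move=> H; apply: (big_ind S) => //; [exact: sr0 | exact: srD]. Qed.
Lemma sr_prod (I : finType) (P : pred I) (G : I -> A) :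
  (forall i, S (G i)) -> S (\prod_(i | P i) G i).
Proof. move=> H; apply: (big_ind S) => //; [exact: sr1 | exact: srM]. Qed.
Lemma sr_det k (M : 'M[A]_k) : ent S M -> S (\det M).
Proof.
move=> H; rewrite /determinant; apply: sr_sum => s; apply: srM.
  by apply: srX; apply: srN; apply: sr1.
by apply: sr_prod.
Qed.
Lemma ent_mul m k l (a : 'M[A]_(m, k)) (b : 'M[A]_(k, l)) : ent S a -> ent S b -> ent S (a *m b).
Proof. by move=> Ha Hb i j; rewrite mxE; apply: sr_sum => t; apply: srM. Qed.
Lemma ent_tr m k (a : 'M[A]_(m, k)) : ent S a -> ent S a^T.
Proof. by move=> Ha i j; rewrite mxE. Qed.
Lemma ent1 k : ent S (1%:M : 'M[A]_k).
Proof. by move=> i j; rewrite mxE; apply: sr_bool. Qed.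
Lemma ent_int m k (a : 'M[int]_(m, k)) : ent S (map_mx (fun z : int => z%:~R) a).
Proof. by move=> i j; rewrite mxE; apply: sr_int. Qed.
Lemma ent_adj k (M : 'M[A]_k) : ent S M -> ent S (\adj M).
Proof.
move=> H i j; rewrite mxE /cofactor; apply: srM.
  by apply: srX; apply: srN; apply: sr1.
by apply: sr_det => a b; rewrite !mxE.
Qed.
Lemma det1_unit k (M : 'M[A]_k) : \det M = 1 -> M \in unitmx.
Proof. by move=> H; rewrite unitmxE H unitr1. Qed.
Lemma invmx_det1 k (M : 'M[A]_k) : \det M = 1 -> invmx M = \adj M.
Proof. by move=> H; rewrite /invmx det1_unit // H invr1 scale1r. Qed.
Lemma ent_inv k (M : 'M[A]_k) : \det M = 1 -> ent S M -> ent S (invmx M).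
Proof. by move=> H1 H; rewrite invmx_det1 //; apply: ent_adj. Qed.
End SubR.

Definition e_row (A : ringType) n : 'M[A]_(1, n.+1) := (e_last A n)^T.

Lemma lastrowP (A : comUnitRingType) n (g : 'M[A]_n.+1) :
  (forall j, g ord_max j = (j == ord_max)%:R) <-> e_row A n *m g = e_row A n.
Proof.
have E : forall j, (e_row A n *m g) 0 j = g ord_max j.
  move=> j; rewrite mxE (bigD1 ord_max) //= big1 ?addr0.
    by rewrite !mxE eqxx mul1r.
  by move=> i /negbTE Hi; rewrite !mxE Hi mul0r.
split=> H.
  by apply/matrixP=> i j; rewrite ord1 E H !mxE.
by move=> j; rewrite -E H !mxE.
Qed.


Section SOASL.
Variables (A : comUnitRingType) (n : nat) (S : A -> Prop).
Hypothesis hS : subr S.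
Implicit Types g h : 'M[A]_n.+1.

Lemma SO_unit g : isSO S g -> g \in unitmx.
Proof. by case=> _ _ H; apply: det1_unit. Qed.
Lemma ASL_unit g : isASL S g -> g \in unitmx.
Proof. by case=> _ _ H; apply: det1_unit. Qed.
Lemma SO_ent g : isSO S g -> ent S g. Proof. by case. Qed.
Lemma ASL_ent g : isASL S g -> ent S g. Proof. by case. Qed.
Lemma SO_det g : isSO S g -> \det g = 1. Proof. by case. Qed.
Lemma ASL_det g : isASL S g -> \det g = 1. Proof. by case. Qed.
Lemma SO_trK g : isSO S g -> g^T *m g = 1%:M. Proof. by case. Qed.
Lemma SO_Ktr g : isSO S g -> g *m g^T = 1%:M. Proof. by case=> _ H _; apply: mulmx1C. Qed.
Lemma SO_inv g : isSO S g -> invmx g = g^T.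
Proof.
move=> H; rewrite -[RHS]mulmx1 -(mulmxV (SO_unit H)) mulmxA (SO_trK H) mul1mx //.
Qed.
Lemma SO1 : isSO S (1%:M : 'M[A]_n.+1).
Proof. by split; [exact: ent1 | rewrite trmx1 mulmx1 | rewrite det1]. Qed.
Lemma SOM g h : isSO S g -> isSO S h -> isSO S (g *m h).
Proof.
move=> Hg Hh; split; first exact: ent_mul (SO_ent Hg) (SO_ent Hh).
  by rewrite trmx_mul mulmxA -[_ *m g^T *m g]mulmxA (SO_trK Hg) mulmx1 (SO_trK Hh).
by rewrite det_mulmx (SO_det Hg) (SO_det Hh) mulr1.
Qed.
Lemma SOtr g : isSO S g -> isSO S g^T.
Proof.
move=> Hg; split; first exact: ent_tr (SO_ent Hg).
  by rewrite trmxK SO_Ktr.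
by rewrite det_tr SO_det.
Qed.
Lemma SOV g : isSO S g -> isSO S (invmx g).
Proof. by move=> Hg; rewrite SO_inv //; apply: SOtr. Qed.
Lemma SOW (S' : A -> Prop) g : (forall x, S x -> S' x) -> isSO S g -> isSO S' g.
Proof. by move=> HS [H1 H2 H3]; split=> // i j; apply: HS. Qed.

Lemma ASL_row g : isASL S g -> e_row A n *m g = e_row A n.
Proof. by case=> _ H _; apply/lastrowP. Qed.
Lemma ASL1 : isASL S (1%:M : 'M[A]_n.+1).
Proof. by split; [exact: ent1 | apply/lastrowP; rewrite mulmx1 | rewrite det1]. Qed.
Lemma ASLM g h : isASL S g -> isASL S h -> isASL S (g *m h).
Proof.
move=> Hg Hh; split; first exact: ent_mul (ASL_ent Hg) (ASL_ent Hh).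
  by apply/lastrowP; rewrite mulmxA (ASL_row Hg) (ASL_row Hh).
by rewrite det_mulmx (ASL_det Hg) (ASL_det Hh) mulr1.
Qed.
Lemma ASLV g : isASL S g -> isASL S (invmx g).
Proof.
move=> Hg; split; first exact: ent_inv (ASL_det Hg) (ASL_ent Hg).
  apply/lastrowP; rewrite -{1}(ASL_row Hg) -mulmxA mulmxV ?mulmx1 //.
  exact: ASL_unit Hg.
by rewrite det_inv (ASL_det Hg) invr1.
Qed.
Lemma ASLW (S' : A -> Prop) g : (forall x, S x -> S' x) -> isASL S g -> isASL S' g.
Proof. by move=> HS [H1 H2 H3]; split=> // i j; apply: HS. Qed.
End SOASL.

Section Map.
Variables (A B : comUnitRingType) (f : {rmorphism A -> B}) (n : nat).
Variables (S : A -> Prop) (S' : B -> Prop).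
Hypothesis hf : forall x, S x -> S' (f x).
Lemma SO_map (g : 'M[A]_n.+1) : isSO S g -> isSO S' (map_mx f g).
Proof.
case=> H1 H2 H3; split.
- by move=> i j; rewrite mxE; apply: hf.
- by rewrite map_trmx -map_mxM H2 map_mx1.
- by rewrite det_map_mx H3 rmorph1.
Qed.
Lemma ASL_map (g : 'M[A]_n.+1) : isASL S g -> isASL S' (map_mx f g).
Proof.
case=> H1 H2 H3; split.
- by move=> i j; rewrite mxE; apply: hf.
- by move=> j; rewrite mxE H2 rmorph_nat.
- by rewrite det_map_mx H3 rmorph1.
Qed.
Lemma vA_map (v : 'cV[int]_n.+1) : map_mx f (vA A v) = vA B v.
Proof. by apply/matrixP=> i j; rewrite !mxE rmorph_int. Qed.
Lemma intM_map (g : 'M[int]_n.+1) : map_mx f (intM A g) = intM B g.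
Proof. by apply/matrixP=> i j; rewrite !mxE rmorph_int. Qed.
Lemma H_map v (g : 'M[A]_n.+1) : isH v S g -> isH v S' (map_mx f g).
Proof. by case=> H1 H2; split; [apply: SO_map | rewrite -vA_map -map_mxM H2]. Qed.
End Map.


Lemma ZintE (q : rat) : Zint q <-> q \is a Num.int.
Proof. by rewrite Qint_def /Zint; split => [->|/eqP]. Qed.

Lemma subr_Zint : subr Zint.
Proof.
split.
- by apply/ZintE; rewrite rpred1.
- by move=> x y /ZintE Hx /ZintE Hy; apply/ZintE; rewrite rpredB.
- by move=> x y /ZintE Hx /ZintE Hy; apply/ZintE; rewrite rpredM.
Qed.

Lemma subr_any (A : comUnitRingType) : subr (@anyA A).
Proof. by []. Qed.

Section Zinv.
Variable p : nat.
Hypothesis pp : prime p.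

Lemma ZinvpE (q : rat) : Zinvp p q <-> exists k : nat, Zint ((p ^ k)%N%:R * q).
Proof.
split.
  case=> k Hk; exists k; apply/ZintE.
  have -> : (p ^ k)%N%:R * q = (numq q)%:~R.
    by rewrite numqE Hk mulrC.
  exact: rpred_int.
case=> k /ZintE /intrP [m Hm].
have Hd : ((p ^ k)%N%:Z * numq q = m * denq q :> int)%R.
  apply: (@intr_inj rat _ _); rewrite !rmorphM /= numqE -Hm.
  by rewrite mulrA.
have : (`|denq q| %| `|numq q| * p ^ k)%N.
  apply/dvdnP; exists `|m|%N.
  have := congr1 (fun z : int => `|z|%N) Hd; rewrite /= !abszM absz_nat => <-.
  by rewrite mulnC.
rewrite Gauss_dvdr; last by rewrite coprime_sym coprime_num_den.
case/(dvdn_pfactor _ _ pp) => j _ Hj; exists j.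
by rewrite -Hj gtz0_abs // denq_gt0.
Qed.

Lemma subr_Zinvp : subr (Zinvp p).
Proof.
split.
- by apply/ZinvpE; exists 0%N; rewrite expn0 mul1r; apply/ZintE; rewrite rpred1.
- move=> x y /ZinvpE [k /ZintE Hk] /ZinvpE [l /ZintE Hl]; apply/ZinvpE; exists (k + l)%N; apply/ZintE.
  rewrite expnD natrM mulrBr.
  have -> : (p ^ k)%N%:R * (p ^ l)%N%:R * x - (p ^ k)%N%:R * (p ^ l)%N%:R * y =
    (p ^ l)%N%:R * ((p ^ k)%N%:R * x) - (p ^ k)%N%:R * ((p ^ l)%N%:R * y) :> rat.
    by rewrite !mulrA [(p ^ l)%N%:R * _]mulrC.
  by apply: rpredB; apply: rpredM => //; apply: rpred_nat.
- move=> x y /ZinvpE [k /ZintE Hk] /ZinvpE [l /ZintE Hl]; apply/ZinvpE; exists (k + l)%N; apply/ZintE.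
  rewrite expnD natrM mulrACA.
  by apply: rpredM.
Qed.

Lemma Zint_Zinvp q : Zint q -> Zinvp p q.
Proof. by move=> H; exists 0%N; rewrite H expn0. Qed.
End Zinv.

Section Qp.
Variables (p : nat) (F : fieldType) (nrm : F -> rat).
Hypothesis pp : prime p.
Hypothesis hQ : is_Qp p nrm.

Lemma nrm1 : nrm 1 = 1.
Proof.
have H1 : nrm 1 != 0 by apply/eqP => /(Qp_nrm_eq0 hQ) /eqP; rewrite oner_eq0.
by apply: (mulIf H1); rewrite -(Qp_nrmM hQ) mulr1 mul1r.
Qed.
Lemma nrmN x : nrm (- x) = nrm x.
Proof.
have : nrm (-1) ^+ 2 == 1 by rewrite expr2 -(Qp_nrmM hQ) mulrNN mulr1 nrm1.
rewrite sqrf_eq1 => /orP [/eqP H|/eqP H].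
  by rewrite -mulN1r (Qp_nrmM hQ) H mul1r.
by have := Qp_nrm_ge0 hQ (-1); rewrite H.
Qed.

Lemma subr_Zp : subr (Defs.Zp nrm).
Proof.
split; rewrite /Defs.Zp.
- by rewrite nrm1.
- move=> x y Hx Hy; apply: le_trans (Qp_nrmD hQ _ _) _.
  by rewrite ge_max Hx nrmN Hy.
- move=> x y Hx Hy; rewrite (Qp_nrmM hQ); apply: mulr_ile1 => //; apply: (Qp_nrm_ge0 hQ).
Qed.

Lemma pabs_neq0 q : q != 0 -> pabs p q != 0.
Proof.
move=> Hq; rewrite /pabs (negbTE Hq) mulf_neq0 // ?invr_eq0 expf_neq0 //;
by rewrite pnatr_eq0 -lt0n prime_gt0.
Qed.

Lemma char0F (z : int) : z != 0 -> (z%:~R : F) != 0.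
Proof.
move=> Hz; apply/eqP => H.
have := Qp_nrm_rat hQ z%:~R; rewrite ratr_int H.
have -> : nrm 0 = 0 by apply/(Qp_nrm_eq0 hQ).
by move/esym/eqP; rewrite (negbTE (pabs_neq0 _)) // intr_eq0.
Qed.

Lemma ZpZinv q : Defs.Zp nrm (ratr q) -> Zinvp p q -> Zint q.
Proof.
rewrite /Defs.Zp (Qp_nrm_rat hQ) => Hle [k Hk].
case: k Hk => [|k] Hk; first by rewrite /Zint Hk expn0.
exfalso.
have p1 : (1 < p)%N by apply: prime_gt1.
have Hq : q != 0.
  apply/eqP => Hq; move: Hk; rewrite Hq.
  have -> : denq (0 : rat) = 1%N%:Z by [].
  move/eqP; rewrite eqz_nat eq_sym => /eqP H.
  by move: H; rewrite expnS => /eqP; rewrite muln_eq1 => /andP[/eqP Hp _]; rewrite Hp in p1.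
move: Hle; rewrite /pabs (negbTE Hq) Hk absz_nat pfactorK //.
rewrite logn_coprime; last first.
  have := coprime_num_den q; rewrite Hk absz_nat coprime_pexpr // coprime_sym //.
rewrite expr0 divr1 leNgt => /negP; apply.
by rewrite exprn_egt1 // ltr1n.
Qed.

Lemma Zint_Zp q : Zint q -> Defs.Zp nrm (ratr q).
Proof.
move=> H; rewrite /ratr H divr1; exact: (sr_int subr_Zp).
Qed.
End Qp.


Section RatF.
Variable F : fieldType.
Hypothesis c0 : forall z : int, z != 0 -> (z%:~R : F) != 0.

Fact ratrF_zmod : zmod_morphism (@ratr F).
Proof.
have injZtoQ: @injective rat int intr by apply: intr_inj.
have nz_den x: (denq x)%:~R != 0 :> F by apply: c0; rewrite denq_eq0.
move=> x y.
apply: (canLR (mulfK (nz_den _))); apply: (mulIf (nz_den x)).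
rewrite mulrAC mulrBl divfK ?nz_den // mulrAC -!rmorphM.
apply: (mulIf (nz_den y)); rewrite mulrAC mulrBl divfK ?nz_den //.
rewrite -!(rmorphM, rmorphB); congr _%:~R; apply: injZtoQ.
rewrite !(rmorphM, rmorphB) /= [_ - _]lock /= -lock !numqE.
by rewrite (mulrAC y) -!mulrBl -mulrA mulrAC !mulrA.
Qed.

Fact ratrF_monoid : monoid_morphism (@ratr F).
Proof.
have injZtoQ: @injective rat int intr by apply: intr_inj.
have nz_den x: (denq x)%:~R != 0 :> F by apply: c0; rewrite denq_eq0.
split=> [|x y]; first by rewrite /ratr divr1.
rewrite /ratr mulrC mulrAC; apply: canLR (mulKf (nz_den _)) _; rewrite !mulrA.
do 2!apply: canRL (mulfK (nz_den _)) _; rewrite -!rmorphM; congr _%:~R.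
apply: injZtoQ; rewrite !rmorphM [x * y]lock /= !numqE -lock.
by rewrite -!mulrA mulrA mulrCA -!mulrA (mulrCA y).
Qed.

Definition ratF : {rmorphism rat -> F} :=
  HB.pack (@ratr F) (GRing.isZmodMorphism.Build _ _ _ ratrF_zmod)
                    (GRing.isMonoidMorphism.Build _ _ _ ratrF_monoid).

Lemma ratFE n (g : 'M[rat]_n.+1) : ratM F g = map_mx ratF g.
Proof. by []. Qed.
End RatF.

Lemma ratRE (R : realType) n (g : 'M[rat]_n.+1) : ratM R g = map_mx (ratr : {rmorphism rat -> R}) g.
Proof. by []. Qed.


Lemma erowE (A : comUnitRingType) n (g : 'M[A]_n.+1) j : (e_row A n *m g) 0 j = g ord_max j.
Proof.
rewrite mxE (bigD1 ord_max) //= big1 ?addr0; first by rewrite !mxE eqxx mul1r.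
by move=> i /negbTE Hi; rewrite !mxE Hi mul0r.
Qed.

Section VG.
Variables (n : nat) (v : 'cV[int]_n.+1) (gv : 'M[int]_n.+1).
Hypothesis hv : primitive v.
Hypothesis hg : is_gv v gv.

Lemma v_neq0 : exists i, v i 0 != 0.
Proof.
apply/existsP; apply: contraT; rewrite negb_exists => /forallP H.
have H2 : forall i : 'I_n.+1, ((2:int) %| v i ord0)%Z.
  by move=> i; have := H i; rewrite negbK => /eqP ->; rewrite dvdz0.
by have := hv H2.
Qed.

Lemma vgv : v^T *m gv = e_row int n.
Proof.
case: hg => Hdet Horth _ Hpos.
set c := (v^T *m gv) 0 ord_max.
have S1 : v^T *m gv = c *: e_row int n.
  apply/matrixP => i j; rewrite ord1 [RHS]mxE.
  case: (eqVneq j ord_max) => [->|Hj]; first by rewrite /e_row [_^T 0 _]mxE [e_last _ _ _ _]mxE eqxx mulr1.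
  rewrite /e_row [_^T 0 _]mxE [e_last _ _ _ _]mxE (negbTE Hj) mulr0 -(Horth j Hj) /dotz mxE; apply: eq_bigr => k _; rewrite !mxE //.
have U : gv \in unitmx by apply: det1_unit.
have S2 : v^T = c *: (e_row int n *m invmx gv).
  by rewrite scalemxAl -S1 mulmxK.
have Hc : `|c| = 1.
  apply: hv => i; have := congr1 (fun m : 'M[int]_(1, n.+1) => m 0 i) S2; rewrite /= !mxE => ->.
  by rewrite dvdz_mulr.
have S3 : e_row int n *m invmx gv = c *: v^T.
  by rewrite S2 scalerA -expr2 -(real_normK (num_real c)) Hc expr1n scale1r.
have Hinv : forall i, invmx gv ord_max i = c * v i 0.
  by move=> i; rewrite -erowE S3 !mxE.
set Mv := \matrix_(i, j) (if j == ord_max then v i ord0 else gv i j) in Hpos.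
have Hdet2 : \det Mv = c * \sum_i v i 0 ^+ 2.
  rewrite (expand_det_col _ ord_max) mulr_sumr; apply: eq_bigr => i _.
  have -> : cofactor Mv i ord_max = cofactor gv i ord_max.
    rewrite /cofactor; congr (_ * \det _); apply/matrixP => a b; rewrite !mxE.
    by rewrite [lift _ _ == _]eq_sym (negbTE (neq_lift _ _)).
  have -> : cofactor gv i ord_max = invmx gv ord_max i by rewrite invmx_det1 // mxE.
  by rewrite Hinv mxE eqxx mulrCA expr2.
have Hs : 0 <= \sum_i v i 0 ^+ 2 :> int by apply: sumr_ge0 => i _; apply: sqr_ge0.
have c1 : c = 1.
  case: (lerP 0 c) => Hc0.
    by rewrite -Hc ger0_norm.
  exfalso; move: Hpos; rewrite Hdet2.
  have -> : c = -1 by rewrite -[c]opprK -(ltr0_norm Hc0) Hc.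
  by rewrite mulN1r oppr_gt0 ltNge Hs.
by rewrite S1 c1 scale1r.
Qed.


Lemma intM_det (A : comUnitRingType) : \det (intM A gv) = 1.
Proof. by case: hg => H _ _ _; rewrite det_map_mx H rmorph1. Qed.

Lemma intM_unit (A : comUnitRingType) : intM A gv \in unitmx.
Proof. by apply: det1_unit; apply: intM_det. Qed.

Lemma vgvA (A : comUnitRingType) : (vA A v)^T *m intM A gv = e_row A n.
Proof.
have := congr1 (map_mx (fun z : int => z%:~R : A)) vgv.
rewrite map_mxM map_trmx => ->.
by apply/matrixP => i j; rewrite !mxE rmorph_nat.
Qed.

Lemma erow_invg (A : comUnitRingType) : e_row A n *m invmx (intM A gv) = (vA A v)^T.
Proof. by rewrite -vgvA mulmxK // intM_unit. Qed.

Lemma conj_ASL (A : comUnitRingType) (S : A -> Prop) (g : 'M[A]_n.+1) :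
  subr S -> isH v S g -> isASL S (invmx (intM A gv) *m g *m intM A gv).
Proof.
move=> hS [Hg Hgv]; split.
- apply: ent_mul => //; last exact: ent_int.
  apply: ent_mul => //; last exact: SO_ent Hg.
  by apply: ent_inv => //; [exact: intM_det | exact: ent_int].
- apply/lastrowP; rewrite !mulmxA erow_invg.
  have -> : (vA A v)^T *m g = (vA A v)^T.
    by rewrite -[X in _ = X]trmxK -{1}Hgv trmx_mul trmxK -mulmxA (SO_trK Hg) mulmx1.
  exact: vgvA.
- by rewrite !det_mulmx det_inv intM_det invr1 mul1r mulr1 (SO_det Hg).
Qed.
End VG.


Lemma trZ (A : comUnitRingType) m k (a : A) (X : 'M[A]_(m, k)) : (a *: X)^T = a *: X^T.
Proof. by apply/matrixP => i j; rewrite !mxE. Qed.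

Section Real.
Variables (R : realType) (n : nat) (v : 'cV[int]_n.+1) (gv : 'M[int]_n.+1) (kv : 'M[R]_n.+1).
Hypothesis hv : primitive v.
Hypothesis hg : is_gv v gv.
Hypothesis hn : (1 <= n)%N.
Hypothesis hkv : isSO (@anyA R) kv.
Hypothesis hkvv : kv *m vA R v = normv R v *: e_last R n.

Let e := e_last R n.
Let nv := normv R v.
Let lam := powR nv (- (n%:R)^-1).

Lemma vA_neq0 : vA R v != 0.
Proof.
case: (v_neq0 hv) => i Hi; apply/negP => /eqP /matrixP /(_ i 0); rewrite !mxE => /eqP.
by rewrite intr_eq0 (negbTE Hi).
Qed.

Lemma normv_gt0 : 0 < nv.
Proof.
rewrite lt_def sqrtr_ge0 andbT; apply/negP => /eqP H0.
have : vA R v = 0.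
  by rewrite -[vA R v]mul1mx -(SO_trK hkv) -mulmxA hkvv -/nv H0 scale0r mulmx0.
by move/eqP; rewrite (negbTE vA_neq0).
Qed.

Lemma erow_kv : e_row R n *m kv = nv^-1 *: (vA R v)^T.
Proof.
have H : (vA R v)^T = nv *: (e_row R n *m kv).
  rewrite scalemxAl /e_row -trZ -/e -/nv -hkvv trmx_mul -mulmxA.
  by rewrite (SO_trK hkv) mulmx1.
rewrite H scalerA mulVf ?scale1r //; exact: lt0r_neq0 normv_gt0.
Qed.

Lemma e_rowe : e_row R n *m e = 1%:M.
Proof.
apply/matrixP => i j; rewrite !ord1 mxE (bigD1 ord_max) //= big1 ?addr0.
  by rewrite !mxE eqxx mulr1.
by move=> k /negbTE Hk; rewrite !mxE Hk mul0r.
Qed.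

Lemma av_formula : av R v = lam%:M + (nv - lam) *: (e *m e_row R n).
Proof.
apply/matrixP => i j; rewrite !mxE (bigD1 ord0) //= big1 ?addr0; last by move=> k; rewrite ord1 eqxx.
rewrite !mxE -/nv -/lam.
case: (eqVneq i j) => [Eij|Hij].
  subst j.
  rewrite !mulr1n; case: (i == ord_max) => /=.
    by rewrite !mulr1 addrC subrK.
  by rewrite mul0r mulr0 addr0.
rewrite !mulr0n add0r.
have : ~~ ((i == ord_max) && (j == ord_max)) by apply: contra Hij => /andP[/eqP -> /eqP ->].
by case: (i == ord_max); case: (j == ord_max) => //= _; rewrite ?mul0r ?mulr0.
Qed.

Lemma Kset_row k : Kset k -> e_row R n *m k = e_row R n.
Proof.
case=> Hk Hke; rewrite /e_row; apply: trmx_inj.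
by rewrite trmx_mul !trmxK -{1}Hke mulmxA (SO_trK Hk) mul1mx.
Qed.

Lemma Kset_av k : Kset k -> k *m av R v = av R v *m k.
Proof.
move=> Hk; have He : k *m e = e by case: Hk.
rewrite av_formula mulmxDr mulmxDl -scalemxAr -scalemxAl.
rewrite mul_mx_scalar mul_scalar_mx mulmxA He -mulmxA Kset_row //.
Qed.

Lemma erow_av : e_row R n *m av R v = nv *: e_row R n.
Proof.
rewrite av_formula mulmxDr mul_mx_scalar -scalemxAr mulmxA e_rowe mul1mx.
by rewrite -scalerDl addrC subrK.
Qed.

Lemma det_av : \det (av R v) = 1.
Proof.
rewrite /av det_diag big_ord_recr /= !mxE eqxx.
have -> : \prod_(i < n) (\row_i0 (if i0 == ord_max then normv R v
                   else normv R v `^ (- n%:R^-1))) 0 (widen_ord (leqnSn n) i) = lam ^+ n.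
  rewrite -[in RHS](card_ord n) -prodr_const; apply: eq_bigr => i _.
  rewrite mxE ifF // -/nv -/lam; apply/negbTE/eqP => /(congr1 val) /= H.
  by have := ltn_ord i; rewrite H ltnn.
rewrite -/nv -powR_mulrn; last by apply: powR_ge0.
rewrite -powRrM mulNr mulVf; last by rewrite pnatr_eq0 -lt0n.
rewrite powR_inv1; last by apply: ltW normv_gt0.
by rewrite mulVf //; apply: lt0r_neq0 normv_gt0.
Qed.

Lemma ASL_k_av k : Kset k ->
  isASL (@anyA R) (k *m (av R v *m kv *m intM R gv)).
Proof.
move=> Hk; split => //.
  apply/lastrowP; rewrite !mulmxA Kset_row // erow_av -!scalemxAl erow_kv.
  by rewrite -scalemxAl scalerA mulfV ?scale1r ?(vgvA hv hg) //; apply: lt0r_neq0 normv_gt0.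
case: Hk => [[_ _ Hk] _].
by rewrite !det_mulmx Hk det_av (SO_det hkv) (intM_det hg) !mul1r.
Qed.
End Real.

Local Open Scope classical_set_scope.

Section Main.
Variables (R : realType) (F : fieldType) (nrm : F -> rat) (p n : nat).
Variables (v : 'cV[int]_n.+1) (gv : 'M[int]_n.+1) (kv : 'M[R]_n.+1) (M : seq 'M[F]_n.+1).
Hypotheses (hn : (1 <= n)%N) (pp : prime p) (hQ : is_Qp p nrm) (hv : primitive v).
Hypotheses (hg : is_gv v gv) (hkv : isSO (@anyA R) kv).
Hypothesis (hkvv : kv *m vA R v = normv R v *: e_last R n).

Implicit Types (m : 'M[rat]_n.+1) (h : 'M[F]_n.+1).
Let fF : {rmorphism rat -> F} := ratF (char0F pp hQ).
Let fR : {rmorphism rat -> R} := ratr.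
Let ZP := Defs.Zp nrm.
Let hZP : subr ZP := subr_Zp hQ.
Let hZI : subr (Zinvp p) := subr_Zinvp pp.
Let AA := av R v *m kv *m intM R gv.
Let FE (g : 'M[rat]_n.+1) : ratM F g = map_mx fF g := erefl.
Let RE (g : 'M[rat]_n.+1) : ratM R g = map_mx fR g := erefl.

Lemma SO_desc m : isSO (Zinvp p) m -> ent ZP (map_mx fF m) -> isSO Zint m.
Proof.
case=> H1 H2 H3 H4; split => // i j; apply: (ZpZinv pp hQ) => //.
by have := H4 i j; rewrite mxE.
Qed.
Lemma ASL_desc m : isASL (Zinvp p) m -> ent ZP (map_mx fF m) -> isASL Zint m.
Proof.
case=> H1 H2 H3 H4; split => // i j; apply: (ZpZinv pp hQ) => //.
by have := H4 i j; rewrite mxE.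
Qed.
Lemma SO_FZ m : isSO Zint m -> isSO ZP (map_mx fF m).
Proof. by apply: SO_map => x Hx; exact: (Zint_Zp hQ Hx). Qed.
Lemma ASL_FZ m : isASL Zint m -> isASL ZP (map_mx fF m).
Proof. by apply: ASL_map => x Hx; exact: (Zint_Zp hQ Hx). Qed.
Lemma SO_R (S : rat -> Prop) m : isSO S m -> isSO (@anyA R) (map_mx fR m).
Proof. by apply: SO_map. Qed.
Lemma ASL_R (S : rat -> Prop) m : isASL S m -> isASL (@anyA R) (map_mx fR m).
Proof. by apply: ASL_map. Qed.
Lemma SO_F (S : rat -> Prop) m : isSO S m -> isSO (@anyA F) (map_mx fF m).
Proof. by apply: SO_map. Qed.
Lemma ASL_F (S : rat -> Prop) m : isASL S m -> isASL (@anyA F) (map_mx fF m).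
Proof. by apply: ASL_map. Qed.
Lemma Zint_Zinvp' x : Zint x -> Zinvp p x. Proof. exact: Zint_Zinvp. Qed.

Lemma conjv_ASL (S : F -> Prop) h : subr S -> isH v S h -> isASL S (conjv gv h).
Proof. by move=> hS Hh; exact: (conj_ASL hv hg hS Hh). Qed.
Lemma gvF_unit : gvF F gv \in unitmx. Proof. exact: (intM_unit hg F). Qed.
Lemma conjvM h h' : conjv gv (h *m h') = conjv gv h *m conjv gv h'.
Proof.
by rewrite /conjv !mulmxA mulmxK ?gvF_unit.
Qed.
Lemma conjv1 : conjv gv (1%:M : 'M[F]_n.+1) = 1%:M.
Proof. by rewrite /conjv mulmx1 mulVmx ?gvF_unit. Qed.

Lemma part1 h c1 c2 g1 g2 : hdecomp nrm p gv h c1 c2 g1 g2 ->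
  qinf_img nrm p (Ovph nrm p v gv kv h) = DKorbit v gv kv g1 g2.
Proof.
case=> Hc1 Hc2 [/= Hg1 Hg2] Eh Ech.
apply/seteqP; split => y /=.
- case=> x [c1' [c2' [gam [del [Sx [Hc1' [Hc2' [[Hgam1 Hgam2] [[Hd1 Hd2] [E1 [E2 ->]]]]]]]]]]].
  case: Sx => k [h' [gam0 [Hk Hh' [Hg01 Hg02] Ex]]]; subst x; simpl in E1, E2 |- *.
  have Uga1 : ratM F gam.1 \in unitmx by apply: SO_unit (SO_F Hgam1).
  have Uga2 : ratM F gam.2 \in unitmx by apply: ASL_unit (ASL_F Hgam2).
  have EF1 : map_mx fF (g1 *m gam0.1 *m invmx gam.1) = c1^T *m h'^T *m c1'.
    rewrite !map_mxM map_invmx -!FE.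
    have Fg1 : ratM F g1 = c1^T *m h by rewrite Eh mulmxA (SO_trK Hc1) mul1mx.
    have E1' : h *m ratM F gam0.1 = h'^T *m c1' *m ratM F gam.1.
      by rewrite -!mulmxA -E1 !mulmxA (SO_trK (proj1 Hh')) mul1mx.
    by rewrite Fg1 -(mulmxA c1^T) E1' !mulmxA mulmxK.
  have EF2 : map_mx fF (invmx g2 *m gam0.2 *m invmx gam.2) =
             invmx c2 *m invmx (conjv gv h') *m c2'.
    rewrite !map_mxM !map_invmx -!FE.
    have Fg2 : invmx (ratM F g2) = invmx c2 *m conjv gv h.
      by rewrite Ech mulKmx // (ASL_unit Hc2).
    have E2' : conjv gv h *m ratM F gam0.2 = invmx (conjv gv h') *m c2' *m ratM F gam.2.
      rewrite -(mulmxA (invmx (conjv gv h'))) -E2 -(mulmxA (conjv gv h')) mulKmx //.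
      exact: ASL_unit (conjv_ASL hZP Hh').
    by rewrite Fg2 -(mulmxA (invmx c2) (conjv gv h)) E2' !mulmxA mulmxK.
  exists k, (g1 *m gam0.1 *m invmx gam.1 *m del.1, invmx g2 *m gam0.2 *m invmx gam.2 *m del.2).
  split => //.
  + split => /=.
    * apply: (SOM subr_Zint) => //; apply: SO_desc.
        exact: (SOM hZI (SOM hZI Hg1 Hg01) (SOV Hgam1)).
      rewrite EF1; apply: (ent_mul hZP); last exact: SO_ent Hc1'.
      apply: (ent_mul hZP); first exact: SO_ent (SOtr Hc1).
      exact: SO_ent (SOtr (proj1 Hh')).
    * apply: (ASLM subr_Zint) => //; apply: ASL_desc.
        exact: (ASLM hZI (ASLM hZI (ASLV hZI Hg2) Hg02) (ASLV hZI Hgam2)).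
      rewrite EF2; apply: (ent_mul hZP); last exact: ASL_ent Hc2'.
      apply: (ent_mul hZP); first exact: ASL_ent (ASLV hZP Hc2).
      exact: ASL_ent (ASLV hZP (conjv_ASL hZP Hh')).
  + have Ug1 : ratM R g1 \in unitmx by apply: SO_unit (SO_R Hg1).
    have Ug2 : ratM R g2 \in unitmx by apply: ASL_unit (ASL_R Hg2).
    by rewrite !RE !map_mxM !map_invmx -!RE !mulmxA mulmxKV // mulmxK.
- case=> k [del [Hk [/= Hd1 Hd2] ->]].
  exists (actGA (mulGA (mkGA k 1%:M k (conjv gv 1%:M)) (mkGA kv h AA (conjv gv h))) (1%:M, 1%:M)).
  exists c1, c2, (g1, invmx g2), del; split.
    exists k, 1%:M, (1%:M, 1%:M); split => //.
    - by split; [exact: SO1 | rewrite mul1mx].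
    - by split; [exact: SO1 | exact: ASL1].
  split => //; split => //; split; first by split => //; apply: ASLV.
  split; first by split.
  rewrite /= !FE !RE !map_mx1 !mulmx1 mul1mx conjv1 mul1mx -Eh map_invmx Ech.
  split => //; split => //.
  by rewrite map_invmx invmxK.
Qed.

Lemma invmxM' (A B : 'M[R]_n.+1) : A \in unitmx -> B \in unitmx ->
  invmx (A *m B) = invmx B *m invmx A.
Proof.
move=> UA UB; have UAB : A *m B \in unitmx by rewrite unitmx_mul UA UB.
have H : (A *m B) *m (invmx B *m invmx A) = 1%:M.
  by rewrite -mulmxA (mulmxA B) mulmxV // mul1mx mulmxV.
by rewrite -[LHS]mulmx1 -H mulmxA mulVmx // mul1mx.
Qed.

Lemma K_fix m k k' X : Kset k -> Kset k' -> X *m vA R v = vA R v ->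
  k *m kv *m map_mx fR m = k' *m kv *m X -> map_mx fR m *m vA R v = vA R v.
Proof.
move=> Hk Hk' HX E.
have Hke : k *m e_last R n = e_last R n by case: Hk.
have Hk'e : k' *m e_last R n = e_last R n by case: Hk'.
have HkTe : k^T *m e_last R n = e_last R n.
  by rewrite -{1}Hke mulmxA (SO_trK (proj1 Hk)) mul1mx.
have E1 : map_mx fR m = kv^T *m k^T *m (k' *m kv *m X).
  rewrite -E !mulmxA -(mulmxA kv^T k^T k) (SO_trK (proj1 Hk)) mulmx1 (SO_trK hkv).
  by rewrite mul1mx.
rewrite E1 -!mulmxA HX hkvv -!scalemxAr Hk'e HkTe scalemxAr -hkvv mulmxA (SO_trK hkv).
by rewrite mul1mx.
Qed.

Lemma fix_desc m : isSO (Zinvp p) m -> map_mx fR m *m vA R v = vA R v -> isH v (Zinvp p) m.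
Proof.
move=> Hm E; split => //; apply: (map_mx_inj (f := fR)).
by rewrite map_mxM !(vA_map fR).
Qed.

Lemma Kset1 : Kset (1%:M : 'M[R]_n.+1).
Proof. by split; [exact: SO1 | rewrite mul1mx]. Qed.

Lemma HW (A : comUnitRingType) (S : A -> Prop) g : isH v S g -> isH v (@anyA A) g.
Proof. by case=> H1 H2; split => //; apply: SOW H1. Qed.

Lemma fixV (A : comUnitRingType) (g : 'M[A]_n.+1) : g \in unitmx -> g *m vA A v = vA A v ->
  invmx g *m vA A v = vA A v.
Proof. by move=> U E; rewrite -{1}E mulKmx. Qed.

Lemma part2a h h' c1 c2 g1 g2 c1' c2' g1' g2' : is_reps nrm p v M ->
  inM0 nrm p M h -> inM0 nrm p M h' -> h <> h' ->
  hdecomp nrm p gv h c1 c2 g1 g2 -> hdecomp nrm p gv h' c1' c2' g1' g2' ->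
  Korbit1 kv g1 `&` Korbit1 kv g1' = set0.
Proof.
move=> [HM1 _ HM3] [hM _] [h'M _] Hne [Hc1 _ [/= Hg1 _] Eh _] [Hc1' _ [/= Hg1' _] Eh' _].
apply/seteqP; split => // y [[k [d [Hk Hd Ey]]] [k' [d' [Hk' Hd' Ey']]]].
apply: Hne; apply: HM3 => //.
set r := invmx g1 *m d *m invmx d' *m g1'.
have Ud : ratM R d \in unitmx by apply: SO_unit (SO_R Hd).
have Ud' : ratM R d' \in unitmx by apply: SO_unit (SO_R Hd').
have Ug1' : ratM R g1' \in unitmx by apply: SO_unit (SO_R Hg1').
have Er : k *m kv *m map_mx fR r = k' *m kv *m 1%:M.
  rewrite /r !map_mxM !map_invmx -!RE !mulmxA -Ey Ey' mulmxK // mulmxKV //.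
  by rewrite mulmx1.
have Hr : isSO (Zinvp p) r.
  apply: (SOM hZI); last by apply: SOW Hg1'.
  apply: (SOM hZI); last by apply: SOV; apply: SOW Hd' => x; apply: Zint_Zinvp.
  apply: (SOM hZI); first exact: SOV.
  by apply: SOW Hd => x; apply: Zint_Zinvp.
have HrH : isH v (Zinvp p) r.
  by apply: fix_desc => //; apply: (K_fix Hk Hk' _ Er); rewrite mul1mx.
set a := c1' *m ratM F d' *m invmx (ratM F d) *m invmx c1.
have UFd : ratM F d \in unitmx by apply: SO_unit (SO_F Hd).
have UFd' : ratM F d' \in unitmx by apply: SO_unit (SO_F Hd').
have UFg1 : ratM F g1 \in unitmx by apply: SO_unit (SO_F Hg1).
have Uc1 : c1 \in unitmx by apply: SO_unit Hc1.
have Ea : h' = a *m h *m ratM F r.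
  rewrite /a /r Eh Eh' !FE !map_mxM !map_invmx -!FE !mulmxA.
  by rewrite mulmxKV // mulmxK // mulmxKV // mulmxK.
exists a, r; split => //.
have [hH _] := HM1 h hM; have [h'H _] := HM1 h' h'M.
split.
  apply: (SOM hZP); last exact: SOV.
  apply: (SOM hZP); last exact: SOV (SO_FZ Hd).
  by apply: (SOM hZP) => //; apply: SO_FZ.
have Ea' : a = h' *m invmx (ratM F r) *m invmx h.
  have UFr : ratM F r \in unitmx by apply: SO_unit (SO_F Hr).
  have Uh : h \in unitmx by apply: SO_unit hH.
  by rewrite Ea mulmxK // mulmxK.
have HhF := HM1 h hM; have Hh'F := HM1 h' h'M.
have HrF : isH v (@anyA F) (ratM F r) by apply: (H_map (f := fF)) HrH.
rewrite Ea' -!mulmxA fixV ?(proj2 HhF) //; last by apply: SO_unit hH.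
rewrite fixV ?(proj2 HrF) //; last by apply: SO_unit (proj1 HrF).
exact: (proj2 Hh'F).
Qed.


Lemma Kconj k : Kset k -> isH v (@anyA R) (kv^T *m k *m kv).
Proof.
move=> Hk; split.
  by apply: SOM => //; apply: SOM => //; [apply: SOtr | case: Hk].
have Hke : k *m e_last R n = e_last R n by case: Hk.
rewrite -!mulmxA hkvv -!scalemxAr Hke scalemxAr -hkvv mulmxA (SO_trK hkv).
by rewrite mul1mx.
Qed.

Lemma conjvF m : map_mx fF (invmx (intM rat gv) *m m *m intM rat gv) = conjv gv (ratM F m).
Proof. by rewrite !map_mxM map_invmx (intM_map fF). Qed.
Lemma conjvRm m : map_mx fR (invmx (intM rat gv) *m m *m intM rat gv) =
  invmx (intM R gv) *m ratM R m *m intM R gv.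
Proof. by rewrite !map_mxM map_invmx (intM_map fR). Qed.

Lemma part3 h c1 c2 g1 g2 : is_reps nrm p v M -> inM0 nrm p M h ->
  hdecomp nrm p gv h c1 c2 g1 g2 ->
  qinf_pre nrm p (DKorbit v gv kv g1 g2) `&` Ovp p v gv kv = Ovph nrm p v gv kv h.
Proof.
move=> [HM1 _ _] [hM _] [Hc1 Hc2 [/= Hg1 Hg2] Eh Ech].
have HhF := HM1 h hM.
have Uh : h \in unitmx by apply: SO_unit (proj1 HhF).
have UGR : intM R gv \in unitmx by exact: (intM_unit hg R).
apply/seteqP; split => x /=.
- case=> [[c1' [c2' [gam [HGA [Hc1' [Hc2' [[Hga1 Hga2] [E1 [E2 HDK]]]]]]]]]].
  case=> hi [hp [gam0 [Hhi Hhp [Hg01 Hg02] Ex]]]; subst x; simpl in E1, E2, HDK.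
  case: HDK => k [d [Hk [Hd1 Hd2] Ey]].
  have Ey1 := congr1 fst Ey; simpl in Ey1.
  have URga : ratM R gam.1 \in unitmx by apply: SO_unit (SO_R Hga1).
  have UR01 : ratM R gam0.1 \in unitmx by apply: SO_unit (SO_R Hg01).
  have UFga : ratM F gam.1 \in unitmx by apply: SO_unit (SO_F Hga1).
  have UF01 : ratM F gam0.1 \in unitmx by apply: SO_unit (SO_F Hg01).
  have UFd : ratM F d.1 \in unitmx by apply: SO_unit (SO_F Hd1).
  have UFg1 : ratM F g1 \in unitmx by apply: SO_unit (SO_F Hg1).
  have Uc1 : c1 \in unitmx by apply: SO_unit Hc1.
  set r := invmx g1 *m d.1 *m gam.1 *m invmx gam0.1.
  have Er : k *m kv *m map_mx fR r = kv *m hi.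
    by rewrite /r !map_mxM !map_invmx -!RE !mulmxA -Ey1 mulmxKV // mulmxK.
  have Hr : isSO (Zinvp p) r.
    apply: (SOM hZI); last exact: SOV.
    apply: (SOM hZI) => //; apply: (SOM hZI); first exact: SOV.
    by apply: SOW Hd1 => y; apply: Zint_Zinvp.
  have HrH : isH v (Zinvp p) r.
    apply: fix_desc => //; apply: (K_fix Hk Kset1 (proj2 Hhi)).
    by rewrite Er mul1mx.
  set a := c1' *m invmx (ratM F d.1) *m invmx c1.
  have Ea : hp = a *m h *m ratM F r.
    rewrite /a /r Eh !FE !map_mxM !map_invmx -!FE !mulmxA mulmxKV // mulmxK // mulmxKV //.
    by rewrite -E1 mul1mx mulmxK.
  have UFr : ratM F r \in unitmx by apply: SO_unit (SO_F Hr).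
  have HrF : isH v (@anyA F) (ratM F r) by apply: (H_map (f := fF)) HrH.
  have Ha : isH v ZP a.
    split.
      apply: (SOM hZP); last exact: SOV.
      by apply: (SOM hZP) => //; apply: SOV; apply: SO_FZ.
    have Ea' : a = hp *m invmx (ratM F r) *m invmx h by rewrite Ea mulmxK // mulmxK.
    rewrite Ea' -!mulmxA fixV ?(proj2 HhF) //.
    by rewrite fixV ?(proj2 HrF) // (proj2 Hhp).
  exists k, a, (r *m gam0.1, invmx (intM rat gv) *m r *m intM rat gv *m gam0.2); split => //.
    by split; [exact: (SOM hZI (proj1 HrH) Hg01) | exact: (ASLM hZI (conj_ASL hv hg hZI HrH) Hg02)].
  rewrite /actGA /mulGA /=; congr mkGA.
  - by rewrite !RE map_mxM -!RE mulmxA Er.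
  - by rewrite mul1mx !FE map_mxM -!FE mulmxA -Ea.
  - rewrite !RE map_mxM conjvRm -!RE /AA /conjvR !mulmxA !mulmxK //.
    by rewrite -(mulmxA (av R v) kv hi) -Er !mulmxA -(Kset_av v Hk).
  - rewrite !FE map_mxM conjvF -!FE mul1mx Ea !conjvM.
    by rewrite -!mulmxA.
- case=> k [h' [gam0 [Hk Hh' [Hg01 Hg02] ->]]].
  have Ug1 : ratM R g1 \in unitmx by apply: SO_unit (SO_R Hg1).
  have Ug2 : ratM R g2 \in unitmx by apply: ASL_unit (ASL_R Hg2).
  have U01 : ratM R gam0.1 \in unitmx by apply: SO_unit (SO_R Hg01).
  have U02 : ratM R gam0.2 \in unitmx by apply: ASL_unit (ASL_R Hg02).
  split.
    exists (h' *m c1), (conjv gv h' *m c2), (g1 *m gam0.1, invmx g2 *m gam0.2) => /=.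
    split.
      split; split => /=.
      + by apply: (SOM (@subr_any R)); [apply: (SOM (@subr_any R)); [case: Hk|] | apply: SO_R Hg01].
      + apply: (ASLM (@subr_any R)); last exact: ASL_R Hg02.
        exact: (ASL_k_av hv hg hn hkv hkvv Hk).
      + apply: (SOM (@subr_any F)); last exact: SO_F Hg01.
        by apply: (SOM (@subr_any F)); [apply: SOW (proj1 Hh') | apply: (proj1 HhF)].
      + apply: (ASLM (@subr_any F)); last exact: ASL_F Hg02.
        apply: (ASLM (@subr_any F)); apply: (conjv_ASL (@subr_any F)) => //.
        exact: HW Hh'.
    split; first exact: (SOM hZP (proj1 Hh') Hc1).
    split; first exact: (ASLM hZP (conjv_ASL hZP Hh') Hc2).
    split; first by split; [apply: (SOM hZI) | apply: (ASLM hZI) => //; apply: (ASLV hZI)].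
    split; first by rewrite !FE map_mxM -!FE !mulmxA -(mulmxA h' c1) -Eh.
    split; first by rewrite !FE map_mxM map_invmx -!FE (mulmxA (conjv gv h' *m c2)) -(mulmxA (conjv gv h') c2) -Ech.
    exists k, (1%:M, 1%:M); split => //.
      by split => /=; [apply: (SO1 _ subr_Zint) | apply: (ASL1 _ subr_Zint)].
    rewrite /= !RE !map_mxM !map_invmx !map_mx1 -!RE !mulmx1 invmxM' // invmxM' ?unitmx_inv // invmxK.
    by rewrite !mulmxA !mulmxK.
  exists (kv^T *m k *m kv), (h' *m h), gam0; split.
  - exact: Kconj Hk.
  - split; first by apply: (SOM (@subr_any F)); [apply: SOW (proj1 Hh') | apply: (proj1 HhF)].
    by rewrite -mulmxA (proj2 HhF) (proj2 Hh').
  - by split.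
  rewrite /actGA /mulGA /=; congr mkGA.
  - by rewrite !mulmxA (SO_Ktr hkv) mul1mx.
  - by rewrite mul1mx.
  - rewrite /AA /conjvR !mulmxA mulmxK // -(mulmxA (av R v) kv kv^T) (SO_Ktr hkv) mulmx1.
    by rewrite (Kset_av v Hk).
  - by rewrite mul1mx conjvM.
Qed.

Lemma part2 h h' c1 c2 g1 g2 c1' c2' g1' g2' : is_reps nrm p v M ->
  inM0 nrm p M h -> inM0 nrm p M h' -> h <> h' ->
  hdecomp nrm p gv h c1 c2 g1 g2 -> hdecomp nrm p gv h' c1' c2' g1' g2' ->
  Korbit1 kv g1 `&` Korbit1 kv g1' = set0 /\
  qinf_img nrm p (Ovph nrm p v gv kv h) `&` qinf_img nrm p (Ovph nrm p v gv kv h') = set0.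
Proof.
move=> HM H0 H0' Hne Hd Hd'.
have K := part2a HM H0 H0' Hne Hd Hd'.
split => //.
rewrite (part1 Hd) (part1 Hd').
apply/seteqP; split => // y [[k [d [Hk [Hd1 _] Ey]]] [k' [d' [Hk' [Hd1' _] Ey']]]].
have : (Korbit1 kv g1 `&` Korbit1 kv g1') y.1.
  by split; [exists k, d.1; rewrite Ey | exists k', d'.1; rewrite Ey'].
by rewrite K.
Qed.
End Main.

Unset Implicit Arguments. Set Strict Implicit.
Theorem proposition3p6 (R : realType) (F : fieldType) (nrm : F -> rat) (p n : nat)
  (v : 'cV[int]_n.+1) (gv : 'M[int]_n.+1) (kv : 'M[R]_n.+1)
  (M : seq 'M[F]_n.+1) :
  (1 <= n)%N -> prime p -> odd p -> is_Qp p nrm ->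
  primitive v -> is_gv v gv ->
  isSO (@anyA R) kv -> kv *m vA R v = normv R v *: e_last R n ->
  is_reps nrm p v M ->
  (* (1) *)
  (forall h c1 c2 gam1 gam2, inM0 nrm p M h -> hdecomp nrm p gv h c1 c2 gam1 gam2 ->
     qinf_img nrm p (Ovph nrm p v gv kv h) = DKorbit v gv kv gam1 gam2) /\
  (* (2) *)
  (forall h h' c1 c2 gam1 gam2 c1' c2' gam1' gam2',
     inM0 nrm p M h -> inM0 nrm p M h' -> h <> h' ->
     hdecomp nrm p gv h c1 c2 gam1 gam2 -> hdecomp nrm p gv h' c1' c2' gam1' gam2' ->
     Korbit1 kv gam1 `&` Korbit1 kv gam1' = set0 /\
     qinf_img nrm p (Ovph nrm p v gv kv h) `&` qinf_img nrm p (Ovph nrm p v gv kv h')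
       = set0) /\
  (* (3) *)
  (forall h c1 c2 gam1 gam2, inM0 nrm p M h -> hdecomp nrm p gv h c1 c2 gam1 gam2 ->
     qinf_pre nrm p (DKorbit v gv kv gam1 gam2) `&` Ovp p v gv kv
       = Ovph nrm p v gv kv h).
Proof.
move=> hn pp _ hQ hv hg hkv hkvv hM.
split; [|split].
- by move=> h c1 c2 g1 g2 _ Hd; exact: (part1 kv pp hQ hv hg Hd).
- by move=> h h' c1 c2 g1 g2 c1' c2' g1' g2' H0 H0' Hne Hd Hd'; exact: (part2 pp hQ hv hg hkv hkvv hM H0 H0' Hne Hd Hd').
- by move=> h c1 c2 g1 g2 H0 Hd; exact: (part3 hn pp hQ hv hg hkv hkvv hM H0 Hd).
Qed.
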